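(* Let $d_\rho,d_v\ge1$ and let $X$ be a finite set. Let complex arrays $U^{ab}_{ij}$, $R^{yx}_{ab}$, $V^{yx}_{ij}$ and vectors $(e_x)_{x\in X}$, $(u_x)_{x\in X}$ be given (indices $a,b\in\{1,\dots,d_\rho\}$, $i,j\in\{1,\dots,d_v\}$, $x,y\in X$) satisfying, for all indices: (1) $\sum_{z\in X}R^{yz}_{ab}V^{zx}_{ij}=\sum_{z\in X}\sum_{k=1}^{d_v}\sum_{c=1}^{d_\rho}V^{yz}_{ik}R^{zx}_{ac}U^{cb}_{kj}$; (2) $\sum_{y}e_yV^{yx}_{ij}=\delta_{ij}e_x$; (3) $\sum_xR^{yx}_{ab}u_x=\delta_{ab}u_y$; (4) $\sum_xe_xu_x=1$. For $n\ge1$ define $$M_n(a_1,i_1,\dots,a_n,i_n;b_1,j_1,\dots,b_n,j_n)=\sum_{x_0,\dots,x_{2n}\in X}e_{x_0}\prod_{m=1}^{n}\Big(R^{x_{2m-2}x_{2m-1}}_{a_mb_m}V^{x_{2m-1}x_{2m}}_{i_mj_m}\Big)u_{x_{2n}},$$ and define $T_n$ recursively by $T_1(a_1,i_1;b_1,j_1)=U^{a_1b_1}_{i_1j_1}$ and, for $n\ge2$, $$T_n(a_1,i_1,\dots,a_n,i_n;b_1,j_1,\dots,b_n,j_n)=\sum_{c_1,\dots,c_{n-1}}\sum_{k_2,\dots,k_n}T_{n-1}(a_1,i_2,a_2,i_3,\dots,a_{n-1},i_n;c_1,k_2,c_2,k_3,\dots,c_{n-1},k_n)\prod_{m=1}^nU^{c_mb_m}_{k_mj_m},$$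 with the conventions $k_1:=i_1$, $c_n:=a_n$ (sums over $c_m\in\{1,\dots,d_\rho\}$, $k_m\in\{1,\dots,d_v\}$). Then $M_n=T_n$ for every $n\ge1$.
   Context: $T_n$ is the contraction of a triangular brickwork tensor network built from $n(n+1)/2$ copies of the four-index tensor $U$ (a ''light cone'' of two-site gates with inputs $(b_m,j_m)$ and outputs $(i,a)$), and $M_n$ is a matrix product operator of bond dimension $|X|$ with left boundary vector $e$ and right boundary vector $u$. *)

(* Defs.v *)
From HB Require Import structures.
From mathcomp Require Import all_boot all_order all_algebra.
From mathcomp Require Import complex.
From mathcomp Require Import reals.
Set Implicit Arguments. Unset Strict Implicit. Unset Printing Implicit Defensive.
Import Order.TTheory GRing.Theory Num.Theory.
Local Open Scope ring_scope.

(* Index conventions (0-based): U a b i j = U^{ab}_{ij};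
   R y x a b = R^{yx}_{ab};  V y x i j = V^{yx}_{ij}.
   Index strings (a_1,...,a_n) are functions nat -> 'I_d, read at 0..n-1. *)

Section Tensors.
Variables (K : realType) (dr dv : nat) (X : finType).
Local Notation C := (K[i]).
Variables (U : 'I_dr -> 'I_dr -> 'I_dv -> 'I_dv -> C)
          (R : X -> X -> 'I_dr -> 'I_dr -> C)
          (V : X -> X -> 'I_dv -> 'I_dv -> C)
          (e u : X -> C).

Definition Mn (n : nat) (a : nat -> 'I_dr) (i : nat -> 'I_dv)
           (b : nat -> 'I_dr) (j : nat -> 'I_dv) : C :=
  \sum_(x : {ffun 'I_(n.*2).+1 -> X})
     (e (x ord0) *
      (\prod_(m < n) (R (x (inord m.*2)) (x (inord m.*2.+1)) (a m) (b m) *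
                      V (x (inord m.*2.+1)) (x (inord m.*2.+2)) (i m) (j m)))
      * u (x ord_max)).

(* Tp n = T_{n+1} *)
Fixpoint Tp (n : nat) (a : nat -> 'I_dr) (i : nat -> 'I_dv)
         (b : nat -> 'I_dr) (j : nat -> 'I_dv) {struct n} : C :=
  match n with
  | 0 => U (a 0%N) (b 0%N) (i 0%N) (j 0%N)
  | n'.+1 =>
    \sum_(cf : {ffun 'I_n'.+1 -> 'I_dr}) \sum_(kf : {ffun 'I_n'.+1 -> 'I_dv})
      (Tp n' a (fun t => i t.+1) (fun t => cf (inord t)) (fun t => kf (inord t)) *
       \prod_(m < n'.+2)
          U (if (m < n'.+1)%N then cf (inord m) else a m) (b m)
            (if m == 0%N :> nat then i 0%N else kf (inord m.-1)) (j m))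
  end.

Definition Tn (n : nat) := Tp n.-1.

End Tensors.

(* Main.v *)
Require Import Defs.
From HB Require Import structures.
From mathcomp Require Import all_boot all_order all_algebra.
From mathcomp Require Import complex reals ring.
From mathcomp Require Import all_boot all_order all_algebra.
Set Implicit Arguments. Unset Strict Implicit. Unset Printing Implicit Defensive.
Import Order.TTheory GRing.Theory Num.Theory.
Local Open Scope ring_scope.

Definition ext (T : Type) m (f : {ffun 'I_m -> T}) (y : T) : {ffun 'I_m.+1 -> T} :=
  [ffun t => if unlift ord_max t is Some t' then f t' else y].

Definition restr (T : Type) m (F : {ffun 'I_m.+1 -> T}) : {ffun 'I_m -> T} :=
  [ffun t => F (widen_ord (leqnSn m) t)].

Lemma ext_max (T : Type) m (f : {ffun 'I_m -> T}) y : ext f y ord_max = y.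
Proof. by rewrite /ext ffunE unlift_none. Qed.

Lemma ext_widen (T : Type) m (f : {ffun 'I_m -> T}) y t :
  ext f y (widen_ord (leqnSn m) t) = f t.
Proof.
rewrite /ext ffunE.
have -> : widen_ord (leqnSn m) t = lift ord_max t by apply: val_inj; rewrite /= /bump leqNgt ltn_ord.
by rewrite liftK.
Qed.

Lemma restr_ext (T : Type) m (f : {ffun 'I_m -> T}) y : restr (ext f y) = f.
Proof. by apply/ffunP => t; rewrite ffunE ext_widen. Qed.

Lemma ext_restr (T : Type) m (F : {ffun 'I_m.+1 -> T}) : ext (restr F) (F ord_max) = F.
Proof.
apply/ffunP => t; rewrite /ext ffunE.
case: unliftP => [j ->|->] //.
by rewrite ffunE; congr (F _); apply: val_inj; rewrite /= /bump leqNgt ltn_ord.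
Qed.

Lemma sum_ffunS (C : nmodType) (T : finType) m (P : {ffun 'I_m.+1 -> T} -> C) :
  \sum_(F : {ffun 'I_m.+1 -> T}) P F = \sum_(f : {ffun 'I_m -> T}) \sum_(y : T) P (ext f y).
Proof.
rewrite pair_bigA /=.
rewrite (reindex (fun p : {ffun 'I_m -> T} * T => ext p.1 p.2)) //=.
exists (fun F => (restr F, F ord_max)) => [[f y] _|F _] /=.
  by rewrite restr_ext ext_max.
by rewrite ext_restr.
Qed.

Lemma sum_ffun1 (C : nmodType) (T : finType) (P : {ffun 'I_1 -> T} -> C) :
  \sum_(F : {ffun 'I_1 -> T}) P F = \sum_(y : T) P [ffun=> y].
Proof.
rewrite (reindex (fun y : T => [ffun=> y])) //=.
exists (fun F => F ord0) => [y _|F _] /=; first by rewrite ffunE.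
by apply/ffunP => t; rewrite ffunE (ord1 t).
Qed.

Lemma ext_inord_lt (T : Type) k (f : {ffun 'I_k.+1 -> T}) y t :
  (t < k.+1)%N -> ext f y (inord t) = f (inord t).
Proof.
move=> ht.
have -> : (inord t : 'I_k.+2) = widen_ord (leqnSn k.+1) (inord t).
  by apply: val_inj; rewrite /= !inordK // ltnS ltnW.
by rewrite ext_widen.
Qed.

Lemma ext_inord_eq (T : Type) k (f : {ffun 'I_k -> T}) y :
  ext f y (inord k) = y.
Proof.
have -> : (inord k : 'I_k.+1) = ord_max by apply: val_inj; rewrite /= inordK.
by rewrite ext_max.
Qed.
Lemma ord0_inord k : (ord0 : 'I_k.+1) = inord 0.
Proof. by apply: val_inj; rewrite /= inordK. Qed.
Lemma ordmax_inord k : (ord_max : 'I_k.+1) = inord k.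
Proof. by apply: val_inj; rewrite /= inordK. Qed.

Section Chain.
Variables (C : comNzRingType) (X : finType) (e : X -> C).

Fixpoint LW (W : nat -> X -> X -> C) N : X -> C :=
  match N with
  | 0 => e
  | N'.+1 => fun y => \sum_(z : X) LW W N' z * W N' z y
  end.

Lemma chainE (W : nat -> X -> X -> C) N (g : X -> C) :
  \sum_(x : {ffun 'I_N.+1 -> X})
     (e (x ord0) * (\prod_(m < N) W m (x (inord m)) (x (inord m.+1))) * g (x ord_max))
  = \sum_(y : X) LW W N y * g y.
Proof.
elim: N g => [|N IH] g.
  rewrite sum_ffun1; apply: eq_bigr => y _.
  by rewrite big_ord0 !ffunE mulr1.
rewrite sum_ffunS.
transitivity (\sum_(f : {ffun 'I_N.+1 -> X}) \sum_(y : X)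
   (e (f ord0) * (\prod_(m < N) W m (f (inord m)) (f (inord m.+1))) * (W N (f ord_max) y * g y))).
  apply: eq_bigr => f _; apply: eq_bigr => y _.
  rewrite big_ord_recr /= ext_max ord0_inord ext_inord_lt // -ord0_inord.
  rewrite -[X in W N _ (ext f y X)]/(inord N.+1) ext_inord_eq ext_inord_lt // -ordmax_inord.
  rewrite !mulrA; congr (_ * _ * _ * _).
  apply: eq_bigr => m _; rewrite !ext_inord_lt // ?ltnS ?(ltnW (ltn_ord m)) //.
rewrite exchange_big; apply: eq_bigr => y _.
rewrite (IH (fun z => W N z y * g y)) /= mulr_suml.
by apply: eq_bigr => z _; rewrite mulrA.
Qed.
End Chain.
Section Main.
Variables (K : realType) (dr dv : nat) (X : finType).
Local Notation C := (K[i]).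
Variables (U : 'I_dr -> 'I_dr -> 'I_dv -> 'I_dv -> C)
          (R : X -> X -> 'I_dr -> 'I_dr -> C)
          (V : X -> X -> 'I_dv -> 'I_dv -> C)
          (e u : X -> C).

Fixpoint P n (a : nat -> 'I_dr) (i : nat -> 'I_dv) (b : nat -> 'I_dr) (j : nat -> 'I_dv) : X -> C :=
  match n with
  | 0 => e
  | n'.+1 => fun x => \sum_(y : X) \sum_(z : X)
       P n' a i b j y * R y z (a n') (b n') * V z x (i n') (j n')
  end.

Lemma P_ext n (a a' : nat -> 'I_dr) (i i' : nat -> 'I_dv) (b b' : nat -> 'I_dr) (j j' : nat -> 'I_dv) :
  (forall t, (t < n)%N -> [/\ a t = a' t, i t = i' t, b t = b' t & j t = j' t]) ->
  P n a i b j =1 P n a' i' b' j'.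
Proof.
elim: n => [|n IH] H x //=.
have [-> -> -> ->] := H n (ltnSn n).
rewrite (eq_bigr (fun y => \sum_(z : X) P n a' i' b' j' y * R y z (a' n) (b' n) * V z x (i' n) (j' n))) //.
move=> y _; rewrite IH // => t ht; apply: H; exact: ltnW.
Qed.

Definition Wf (a : nat -> 'I_dr) (i : nat -> 'I_dv) (b : nat -> 'I_dr) (j : nat -> 'I_dv)
  (m : nat) (p q : X) : C :=
  if odd m then V p q (i m./2) (j m./2) else R p q (a m./2) (b m./2).

Lemma prod_pairs n (a : nat -> 'I_dr) (i : nat -> 'I_dv) (b : nat -> 'I_dr) (j : nat -> 'I_dv) (f : nat -> X) :
  \prod_(m < n) (R (f m.*2) (f m.*2.+1) (a m) (b m) * V (f m.*2.+1) (f m.*2.+2) (i m) (j m))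
  = \prod_(m < n.*2) Wf a i b j m (f m) (f m.+1).
Proof.
elim: n => [|n IH]; first by rewrite !big_ord0.
rewrite big_ord_recr /= IH doubleS !big_ord_recr /= mulrA.
by rewrite /Wf /= odd_double /= uphalf_double doubleK.
Qed.

Lemma LW_P n (a : nat -> 'I_dr) (i : nat -> 'I_dv) (b : nat -> 'I_dr) (j : nat -> 'I_dv) : LW e (Wf a i b j) n.*2 =1 P n a i b j.
Proof.
elim: n => [|n IH] x //=.
under eq_bigr => z _ do rewrite mulr_suml.
rewrite exchange_big; apply: eq_bigr => y _; apply: eq_bigr => z _.
by rewrite /Wf /= odd_double /= uphalf_double doubleK IH.
Qed.

Lemma Mn_P n (a : nat -> 'I_dr) (i : nat -> 'I_dv) (b : nat -> 'I_dr) (j : nat -> 'I_dv) : Mn R V e u n a i b j = \sum_(x : X) P n a i b j x * u x.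
Proof.
rewrite /Mn.
under eq_bigr => x _ do rewrite (prod_pairs n a i b j (fun t => x (inord t))).
rewrite chainE; apply: eq_bigr => y _; by rewrite LW_P.
Qed.

Hypothesis HRV : forall (y x : X) (a b : 'I_dr) (i j : 'I_dv),
     \sum_(z : X) R y z a b * V z x i j =
     \sum_(z : X) \sum_(k : 'I_dv) \sum_(c : 'I_dr) V y z i k * R z x a c * U c b k j.
Hypothesis HeV : forall (x : X) (i j : 'I_dv), \sum_(y : X) e y * V y x i j = (i == j)%:R * e x.
Hypothesis HRu : forall (y : X) (a b : 'I_dr), \sum_(x : X) R y x a b * u x = (a == b)%:R * u y.
Hypothesis Heu : \sum_(x : X) e x * u x = 1.

Lemma sum_delta (T : finType) (t0 : T) (F : T -> C) : \sum_t ((t0 == t)%:R * F t) = F t0.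
Proof.
rewrite (bigD1 t0) //= eqxx mul1r big1 ?addr0 // => t /negPf.
by rewrite eq_sym => ->; rewrite mul0r.
Qed.

Lemma pair_swap (w : X -> C) a b i j x :
  \sum_(y : X) \sum_(z : X) w y * R y z a b * V z x i j =
  \sum_(k : 'I_dv) \sum_(c : 'I_dr) \sum_(z : X) (\sum_(y : X) w y * V y z i k) * R z x a c * U c b k j.
Proof.
transitivity (\sum_(y : X) \sum_(z : X) \sum_(k : 'I_dv) \sum_(c : 'I_dr)
   w y * V y z i k * R z x a c * U c b k j).
  apply: eq_bigr => y _.
  under eq_bigr => z _ do rewrite -mulrA.
  rewrite -mulr_sumr HRV mulr_sumr; apply: eq_bigr => z _.
  rewrite mulr_sumr; apply: eq_bigr => k _.
  rewrite mulr_sumr; apply: eq_bigr => c _.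
  by rewrite !mulrA.
symmetry.
under eq_bigr => k _ do under eq_bigr => c _ do under eq_bigr => z _ do rewrite !mulr_suml.
under eq_bigr => k _ do under eq_bigr => c _ do rewrite exchange_big.
under eq_bigr => k _ do rewrite exchange_big.
rewrite exchange_big; apply: eq_bigr => y _.
under eq_bigr => k _ do rewrite exchange_big.
by rewrite exchange_big.
Qed.

Lemma P1 (a : nat -> 'I_dr) (i : nat -> 'I_dv) (b : nat -> 'I_dr) (j : nat -> 'I_dv) x :
  P 1 a i b j x = \sum_(c : 'I_dr) \sum_(z : X) e z * R z x (a 0%N) c * U c (b 0%N) (i 0%N) (j 0%N).
Proof.
rewrite /= pair_swap.

under [LHS]eq_bigr => k _ do under eq_bigr => c _ do under eq_bigr => z _ do rewrite HeV.
rewrite exchange_big; apply: eq_bigr => c _.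
rewrite exchange_big; apply: eq_bigr => z _.
under [LHS]eq_bigr => k _ do rewrite -!mulrA.
by rewrite (sum_delta (i 0%N) (fun k => e z * (R z x (a 0%N) c * U c (b 0%N) k (j 0%N)))) !mulrA.
Qed.

Lemma PS n (a : nat -> 'I_dr) (i : nat -> 'I_dv) (b : nat -> 'I_dr) (j : nat -> 'I_dv) x :
  P n.+1 a i b j x = \sum_(y : X) \sum_(z : X)
       P n a i b j y * R y z (a n) (b n) * V z x (i n) (j n).
Proof. by []. Qed.

Definition Uprod n (cf : {ffun 'I_n.+1 -> 'I_dr}) (kf : {ffun 'I_n.+1 -> 'I_dv}) (c : 'I_dr)
  (i0 : 'I_dv) (b : nat -> 'I_dr) (j : nat -> 'I_dv) : C :=
  \prod_(m < n.+2) U (if (m < n.+1)%N then cf (inord m) else c) (b m)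
                     (if m == 0%N :> nat then i0 else kf (inord m.-1)) (j m).
Arguments Uprod : clear implicits.

Lemma Uprod_ext n (cf : {ffun 'I_n.+1 -> 'I_dr}) (kf : {ffun 'I_n.+1 -> 'I_dv}) c c' k i0 b j :
  Uprod n.+1 (ext cf c) (ext kf k) c' i0 b j = Uprod n cf kf c i0 b j * U c' (b n.+2) k (j n.+2).
Proof.
rewrite /Uprod big_ord_recr /= ltnn ext_inord_eq; congr (_ * _).
apply: eq_bigr => m _; have hm := ltn_ord m.
congr (U _ _ _ _).
  rewrite hm; case: ltnP => hm2.
    by rewrite ext_inord_lt.
  have -> : (m : nat) = n.+1 by apply/eqP; rewrite eqn_leq hm2 -ltnS hm.
  by rewrite ext_inord_eq.
case: eqP => // h0; rewrite ext_inord_lt //.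
by case: (m : nat) h0 hm => //= m' _ /ltnW.
Qed.

Lemma Uprod0 c0 k c i0 b j :
  Uprod 0 [ffun=> c0] [ffun=> k] c i0 b j = U c0 (b 0%N) i0 (j 0%N) * U c (b 1%N) k (j 1%N).
Proof. by rewrite /Uprod !big_ord_recr big_ord0 /= !ffunE mul1r. Qed.

Lemma ex13 (I J1 J2 J3 : finType) (G : I -> J1 -> J2 -> J3 -> C) :
  \sum_(x : I) \sum_(p : J1) \sum_(q : J2) \sum_(r : J3) G x p q r =
  \sum_(p : J1) \sum_(q : J2) \sum_(r : J3) \sum_(x : I) G x p q r.
Proof.
rewrite exchange_big; apply: eq_bigr => p _.
rewrite exchange_big; apply: eq_bigr => q _.
by rewrite exchange_big.
Qed.

Lemma ex33 (I1 I2 I3 J1 J2 J3 : finType) (G : I1 -> I2 -> I3 -> J1 -> J2 -> J3 -> C) :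
  \sum_(x1 : I1) \sum_(x2 : I2) \sum_(x3 : I3) \sum_(p : J1) \sum_(q : J2) \sum_(r : J3) G x1 x2 x3 p q r =
  \sum_(p : J1) \sum_(q : J2) \sum_(r : J3) \sum_(x1 : I1) \sum_(x2 : I2) \sum_(x3 : I3) G x1 x2 x3 p q r.
Proof.
transitivity (\sum_(x1 : I1) \sum_(x2 : I2) \sum_(p : J1) \sum_(q : J2) \sum_(r : J3) \sum_(x3 : I3) G x1 x2 x3 p q r).
  by apply: eq_bigr => x1 _; apply: eq_bigr => x2 _; rewrite ex13.
transitivity (\sum_(x1 : I1) \sum_(p : J1) \sum_(q : J2) \sum_(r : J3) \sum_(x2 : I2) \sum_(x3 : I3) G x1 x2 x3 p q r).
  by apply: eq_bigr => x1 _; rewrite (ex13 (fun x2 p q r => \sum_(x3 : I3) G x1 x2 x3 p q r)).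
by rewrite (ex13 (fun x1 p q r => \sum_(x2 : I2) \sum_(x3 : I3) G x1 x2 x3 p q r)).
Qed.

Lemma main_rec0 (a : nat -> 'I_dr) (i : nat -> 'I_dv) (b : nat -> 'I_dr) (j : nat -> 'I_dv) x :
  P 2 a i b j x = \sum_(cf : {ffun 'I_1 -> 'I_dr}) \sum_(kf : {ffun 'I_1 -> 'I_dv})
     \sum_(c : 'I_dr) \sum_(z : X)
     P 1 a (fun t => i t.+1) (fun t => cf (inord t)) (fun t => kf (inord t)) z * R z x (a 1%N) c
       * Uprod 0 cf kf c (i 0%N) b j.
Proof.
rewrite sum_ffun1.
under [RHS]eq_bigr => c0 _ do rewrite sum_ffun1.
rewrite (ex13 (fun c0 k c z => P 1 a (fun t => i t.+1) (fun t => [ffun=> c0] (inord t))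
       (fun t => [ffun=> k] (inord t)) z * R z x (a 1%N) c * Uprod 0 [ffun=> c0] [ffun=> k] c (i 0%N) b j)).
rewrite PS pair_swap; apply: eq_bigr => k _; apply: eq_bigr => c _; apply: eq_bigr => z _.
under [RHS]eq_bigr => c0 _ do rewrite Uprod0 PS !ffunE.
under [X in X * _ * _ = _]eq_bigr => y _ do rewrite P1 mulr_suml.
rewrite exchange_big !mulr_suml; apply: eq_bigr => c0 _.
rewrite mulr_suml exchange_big !mulr_suml; apply: eq_bigr => w _.
rewrite !mulr_suml; apply: eq_bigr => y _.
rewrite /=; ring.
Qed.

Lemma Pext_ext n (a : nat -> 'I_dr) (i' : nat -> 'I_dv) (cf : {ffun 'I_n.+1 -> 'I_dr})
  (kf : {ffun 'I_n.+1 -> 'I_dv}) c k y :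
  P n.+1 a i' (fun t => ext cf c (inord t)) (fun t => ext kf k (inord t)) y =
  P n.+1 a i' (fun t => cf (inord t)) (fun t => kf (inord t)) y.
Proof. by apply: P_ext => t ht; split; rewrite ?ext_inord_lt. Qed.

Lemma sum4_mull (I1 I2 I3 I4 : finType) (F : I1 -> I2 -> I3 -> I4 -> C) r :
  (\sum_(x1 : I1) \sum_(x2 : I2) \sum_(x3 : I3) \sum_(x4 : I4) F x1 x2 x3 x4) * r =
  \sum_(x1 : I1) \sum_(x2 : I2) \sum_(x3 : I3) \sum_(x4 : I4) (F x1 x2 x3 x4 * r).
Proof.
rewrite mulr_suml; apply: eq_bigr => x1 _; rewrite mulr_suml; apply: eq_bigr => x2 _.
rewrite mulr_suml; apply: eq_bigr => x3 _; by rewrite mulr_suml.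
Qed.

Lemma main_rec n : forall (a : nat -> 'I_dr) (i : nat -> 'I_dv) (b : nat -> 'I_dr) (j : nat -> 'I_dv) x,
  P n.+2 a i b j x = \sum_(cf : {ffun 'I_n.+1 -> 'I_dr}) \sum_(kf : {ffun 'I_n.+1 -> 'I_dv})
     \sum_(c : 'I_dr) \sum_(z : X)
     P n.+1 a (fun t => i t.+1) (fun t => cf (inord t)) (fun t => kf (inord t)) z * R z x (a n.+1) c
       * Uprod n cf kf c (i 0%N) b j.
Proof.
elim: n => [|n IH] a i b j x; first exact: main_rec0.
rewrite sum_ffunS.
under [RHS]eq_bigr => cf _ do under eq_bigr => c _ do rewrite sum_ffunS.
under [RHS]eq_bigr => cf _ do rewrite exchange_big.
rewrite (ex33 (fun cf kf c k c' z =>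
  P n.+2 a (fun t => i t.+1) (fun t => ext cf c (inord t)) (fun t => ext kf k (inord t)) z
   * R z x (a n.+2) c' * Uprod n.+1 (ext cf c) (ext kf k) c' (i 0%N) b j)).
rewrite PS pair_swap; apply: eq_bigr => k _; apply: eq_bigr => c' _; apply: eq_bigr => z _.
under [RHS]eq_bigr => cf _ do under eq_bigr => kf _ do under eq_bigr => c _ do rewrite Uprod_ext PS.
rewrite -[LHS]mulrA [LHS]mulr_suml.
under [LHS]eq_bigr => y _ do rewrite IH !sum4_mull.
rewrite ex13; apply: eq_bigr => cf _; apply: eq_bigr => kf _; apply: eq_bigr => c _.
rewrite !ext_inord_eq [LHS]exchange_big -[RHS]mulrA [RHS]mulr_suml; apply: eq_bigr => w _.
rewrite [RHS]mulr_suml; apply: eq_bigr => y _.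

rewrite Pext_ext /=; ring.
Qed.

Lemma TpS n (a : nat -> 'I_dr) (i : nat -> 'I_dv) (b : nat -> 'I_dr) (j : nat -> 'I_dv) :
  Tp U n.+1 a i b j =
    \sum_(cf : {ffun 'I_n.+1 -> 'I_dr}) \sum_(kf : {ffun 'I_n.+1 -> 'I_dv})
      (Tp U n a (fun t => i t.+1) (fun t => cf (inord t)) (fun t => kf (inord t)) *
       \prod_(m < n.+2)
          U (if (m < n.+1)%N then cf (inord m) else a m) (b m)
            (if m == 0%N :> nat then i 0%N else kf (inord m.-1)) (j m)).
Proof. by []. Qed.

Lemma MT m : forall (a : nat -> 'I_dr) (i : nat -> 'I_dv) (b : nat -> 'I_dr) (j : nat -> 'I_dv),
  Mn R V e u m.+1 a i b j = Tp U m a i b j.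
Proof.
elim: m => [|n IH] a i b j.
  transitivity (\sum_(c : 'I_dr) \sum_(z : X) e z * ((a 0%N == c)%:R * u z) * U c (b 0%N) (i 0%N) (j 0%N)).
    rewrite Mn_P.
    under eq_bigr => x _ do rewrite P1 mulr_suml.
    rewrite exchange_big; apply: eq_bigr => c _.
    under eq_bigr => x _ do rewrite mulr_suml.
    rewrite exchange_big; apply: eq_bigr => z _.
    transitivity (e z * U c (b 0%N) (i 0%N) (j 0%N) * \sum_(x : X) R z x (a 0%N) c * u x).
      rewrite mulr_sumr; apply: eq_bigr => x _; ring.
    rewrite HRu; ring.
  transitivity (\sum_(c : 'I_dr) (a 0%N == c)%:R * U c (b 0%N) (i 0%N) (j 0%N)).
    apply: eq_bigr => c _.
    rewrite -[RHS]mul1r -Heu mulr_suml; apply: eq_bigr => z _; ring.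
  by rewrite (sum_delta (a 0%N) (fun c => U c (b 0%N) (i 0%N) (j 0%N))).
rewrite Mn_P TpS.
under [RHS]eq_bigr => cf _ do under eq_bigr => kf _ do rewrite -IH Mn_P.
under [LHS]eq_bigr => x _ do rewrite main_rec sum4_mull.
rewrite ex13; apply: eq_bigr => cf _; apply: eq_bigr => kf _.
transitivity (\sum_(c : 'I_dr) (a n.+1 == c)%:R *
   ((\sum_(z : X) P n.+1 a (fun t => i t.+1) (fun t => cf (inord t)) (fun t => kf (inord t)) z * u z)
    * Uprod n cf kf c (i 0%N) b j)).
  apply: eq_bigr => c _.

  rewrite exchange_big [X in _ = _ * X]mulr_suml [RHS]mulr_sumr; apply: eq_bigr => z _.
  transitivity (P n.+1 a (fun t => i t.+1) (fun t => cf (inord t)) (fun t => kf (inord t)) z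
     * Uprod n cf kf c (i 0%N) b j * \sum_(x : X) R z x (a n.+1) c * u x).
    rewrite mulr_sumr; apply: eq_bigr => x _; ring.
  rewrite HRu; ring.
rewrite (sum_delta (a n.+1) (fun c => (\sum_(z : X) P n.+1 a (fun t => i t.+1) (fun t => cf (inord t)) (fun t => kf (inord t)) z * u z)
    * Uprod n cf kf c (i 0%N) b j)).
congr (_ * _); rewrite /Uprod; apply: eq_bigr => m _.
case: ltnP => // hm.
have -> : (m : nat) = n.+1 by apply/eqP; rewrite eqn_leq hm -ltnS ltn_ord.
by [].
Qed.
End Main.

Theorem mainTheorem2 (K : realType) (dr dv : nat) (X : finType)
  (U : 'I_dr -> 'I_dr -> 'I_dv -> 'I_dv -> K[i])
  (R : X -> X -> 'I_dr -> 'I_dr -> K[i])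
  (V : X -> X -> 'I_dv -> 'I_dv -> K[i])
  (e u : X -> K[i]) :
  (0 < dr)%N -> (0 < dv)%N ->
  (forall (y x : X) (a b : 'I_dr) (i j : 'I_dv),
     \sum_(z : X) R y z a b * V z x i j =
     \sum_(z : X) \sum_(k : 'I_dv) \sum_(c : 'I_dr) V y z i k * R z x a c * U c b k j) ->
  (forall (x : X) (i j : 'I_dv), \sum_(y : X) e y * V y x i j = (i == j)%:R * e x) ->
  (forall (y : X) (a b : 'I_dr), \sum_(x : X) R y x a b * u x = (a == b)%:R * u y) ->
  \sum_(x : X) e x * u x = 1 ->
  forall (n : nat), (1 <= n)%N ->
  forall (a : nat -> 'I_dr) (i : nat -> 'I_dv) (b : nat -> 'I_dr) (j : nat -> 'I_dv),
    Mn R V e u n a i b j = Tn U n a i b j.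
Proof.
move=> _ _ H1 H2 H3 H4 [|n] // _ a i b j.
exact: (MT H1 H2 H3 H4 n a i b j).
Qed.
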